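(* Let $n,a,b$ be positive integers and $c$ a nonnegative integer. The polytopes $\mathcal F_{k^{a,b,c}_{n+2}(S)}$, $S\subseteq[n]$, are interior disjoint and satisfy $$\mathcal F_{k^{a,b+1,c}_{n+2}}\equiv\bigcup_{S\subseteq[n]}\mathcal F_{k^{a,b,c}_{n+2}(S)};$$ that is, $\mathcal F_{k^{a,b+1,c}_{n+2}}$ is integrally equivalent to a union of $2^n$ polytopes $P_S$ ($S\subseteq[n]$) with pairwise disjoint interiors, where each $P_S$ is integrally equivalent to $\mathcal F_{k^{a,b,c}_{n+2}(S)}$.
   Context: For a directed multigraph $G$ on $\{0,\dots,n+1\}$ with edges $(i,j)$ oriented $i\to j$, $i<j$, $\mathcal F_G$ is the flow polytope: the set of $f\in\mathbb R_{\ge0}^{E(G)}$ such that the net flow (outgoing minus incoming) is $1$ at vertex $0$, $-1$ at vertex $n+1$ and $0$ at every other vertex. Two polytopes $P\subset\mathbb R^p$, $Q\subset\mathbb R^q$ are integrally equivalent ($P\equiv Q$) if there is an affine map $\mathbb R^p\to\mathbb R^q$ restricting to a bijection $P\to Q$ and to a bijection $\mathrm{aff}(P)\cap\mathbb Z^p\to\mathrm{aff}(Q)\cap\mathbb Z^q$. $k_{n+2}^{a,b,c}$ is the multigraph on $\{0,\dots,n+1\}$ with edge $(0,i)$ of multiplicity $a$ and $(i,n+1)$ of multiplicity $b$ for each $i\in[n]$, and edge $(i,j)$ of multiplicity $c$ for $1\le i<j\le n$. For $S\subseteq[n]$, $k^{a,b,c}_{n+2}(S)$ is obtained from $k^{a,b,c}_{n+2}$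 by adding $n$ edges $(0,n+1)$ and, for each $i\in S$, deleting one of the $a$ copies of $(0,i)$ and adding one edge $(i,n+1)$. *)

(* Defs.v *)
From HB Require Import structures.
From mathcomp Require Import all_boot all_order all_algebra.
From mathcomp Require Import reals.
Set Implicit Arguments. Unset Strict Implicit. Unset Printing Implicit Defensive.
Import Order.TTheory GRing.Theory Num.Theory.
Local Open Scope ring_scope.

(* A directed multigraph on vertices {0,...,n+1} is a list of edges (i,j),
   i < j; the edge set E(G) is indexed by 'I_(size E). *)
Definition mgraph := seq (nat * nat).

Definition inner_pairs (n : nat) : seq (nat * nat) :=
  flatten [seq [seq (i, j) | j <- iota i.+1 (n - i)] | i <- iota 1 n].

Definition kabc (n a b c : nat) : mgraph :=
  flatten [seq nseq a (0%N, i) | i <- iota 1 n]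
  ++ flatten [seq nseq b (i, n.+1) | i <- iota 1 n]
  ++ flatten [seq nseq c p | p <- inner_pairs n].

(* k_{n+2}^{a,b,c}(S), S a subset of [n] encoded as {set 'I_n}
   (k : 'I_n stands for the vertex k+1). *)
Definition kabcS (n a b c : nat) (S : {set 'I_n}) : mgraph :=
  nseq n (0%N, n.+1)
  ++ flatten [seq nseq (a - (k \in S)) (0%N, (val k).+1) | k <- enum 'I_n]
  ++ flatten [seq nseq (b + (k \in S)) ((val k).+1, n.+1) | k <- enum 'I_n]
  ++ flatten [seq nseq c p | p <- inner_pairs n].

Section Poly.
Variable R : realType.

Definition flow_polytope (n : nat) (E : mgraph) : 'rV[R]_(size E) -> Prop :=
  fun f =>
    (forall e : 'I_(size E), 0 <= f 0 e) /\
    (forall v : 'I_n.+2,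
       \sum_(e < size E | (nth (0%N, 0%N) E e).1 == val v) f 0 e
     - \sum_(e < size E | (nth (0%N, 0%N) E e).2 == val v) f 0 e
     = (val v == 0%N)%:R - (val v == n.+1)%:R).

Definition aff (p : nat) (P : 'rV[R]_p -> Prop) : 'rV[R]_p -> Prop :=
  fun x => exists (k : nat) (pts : 'I_k -> 'rV[R]_p) (w : 'I_k -> R),
    (forall i, P (pts i)) /\ \sum_(i < k) w i = 1 /\
    x = \sum_(i < k) w i *: pts i.

Definition is_int_pt (p : nat) (x : 'rV[R]_p) : Prop :=
  forall i, exists z : int, x 0 i = z%:~R.

Definition bij_on (p q : nat) (f : 'rV[R]_p -> 'rV[R]_q)
  (A : 'rV[R]_p -> Prop) (B : 'rV[R]_q -> Prop) : Prop :=
  (forall x, A x -> B (f x)) /\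
  (forall x y, A x -> A y -> f x = f y -> x = y) /\
  (forall y, B y -> exists x, A x /\ f x = y).

Definition int_equiv (p q : nat) (P : 'rV[R]_p -> Prop) (Q : 'rV[R]_q -> Prop)
  : Prop :=
  exists (A : 'M[R]_(p, q)) (b : 'rV[R]_q),
    bij_on (fun x => x *m A + b) P Q /\
    bij_on (fun x => x *m A + b)
      (fun x => aff P x /\ is_int_pt x) (fun y => aff Q y /\ is_int_pt y).

Definition relint (p : nat) (P : 'rV[R]_p -> Prop) : 'rV[R]_p -> Prop :=
  fun x => P x /\ exists e : R, 0 < e /\
    forall y, aff P y -> (forall i, `|y 0 i - x 0 i| < e) -> P y.

End Poly.

(* Main.v *)
Require Import Defs.
From HB Require Import structures.
From mathcomp Require Import all_boot all_order all_algebra all_fingroup.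
From mathcomp Require Import reals.
From mathcomp Require Import ring lra zify.
Set Implicit Arguments. Unset Strict Implicit. Unset Printing Implicit Defensive.
Import Order.TTheory GRing.Theory Num.Theory.

Local Open Scope ring_scope.
Definition intR (R : realType) (x : R) := exists z : int, x = z%:~R.

Lemma intR0 (R : realType) : intR (0 : R).
Proof. by exists 0. Qed.
Lemma intR1 (R : realType) : intR (1 : R).
Proof. by exists 1. Qed.
Lemma intRN1 (R : realType) : intR (-1 : R).
Proof. by exists (-1); rewrite mulrNz. Qed.
Lemma intRn (R : realType) (k : nat) : intR (k%:R : R).
Proof. by exists k; rewrite -pmulrn. Qed.
Lemma intRD (R : realType) (x y : R) : intR x -> intR y -> intR (x + y).
Proof. by move=> [z ->] [w ->]; exists (z + w); rewrite intrD. Qed.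
Lemma intRM (R : realType) (x y : R) : intR x -> intR y -> intR (x * y).
Proof. by move=> [z ->] [w ->]; exists (z * w); rewrite intrM. Qed.
Lemma intR_sum (R : realType) (I : finType) (F : I -> R) :
  (forall i, intR (F i)) -> intR (\sum_i F i).
Proof.
move=> H; apply: (big_ind (@intR R)); [exact: intR0| exact: intRD | by []].
Qed.

Lemma aff_map (R : realType) p q (P : 'rV[R]_p -> Prop) (Q : 'rV[R]_q -> Prop)
  (M : 'M[R]_(p, q)) :
  (forall x, P x -> Q (x *m M)) -> forall x, aff P x -> aff Q (x *m M).
Proof.
move=> H x [k [pts [w [Hp [Hw ->]]]]].
exists k, (fun i => pts i *m M), w; split; first by move=> i; apply: H.
split => //; rewrite mulmx_suml; apply: eq_bigr => i _; by rewrite scalemxAl.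
Qed.

Lemma int_map (R : realType) p q (M : 'M[R]_(p, q)) :
  (forall i j, intR (M i j)) -> forall x, is_int_pt x -> is_int_pt (x *m M).
Proof.
move=> HM x Hx j; rewrite mxE.
have : intR (\sum_i x 0 i * M i j).
  apply: intR_sum => i; apply: intRM => //; exact: Hx.
by [].
Qed.

Lemma lin_equiv (R : realType) p q (P : 'rV[R]_p -> Prop) (Q : 'rV[R]_q -> Prop)
  (M : 'M[R]_(p, q)) (N : 'M[R]_(q, p)) :
  (forall i j, intR (M i j)) -> (forall i j, intR (N i j)) ->
  M *m N = 1%:M -> N *m M = 1%:M ->
  (forall x, P x -> Q (x *m M)) -> (forall y, Q y -> P (y *m N)) ->
  int_equiv P Q.
Proof.
move=> HM HN MN NM PQ QP; exists M, 0.
have inj : forall x y : 'rV[R]_p, x *m M + 0 = y *m M + 0 -> x = y.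
  move=> x y; rewrite !addr0 => /(congr1 (mulmx^~ N)).
  by rewrite -!mulmxA MN !mulmx1.
split.
  split; first by move=> x Px; rewrite addr0; apply: PQ.
  split; first by move=> x y _ _; apply: inj.
  move=> y Qy; exists (y *m N); split; first by apply: QP.
  by rewrite addr0 -mulmxA NM mulmx1.
split.
  move=> x [Ax Ix]; rewrite addr0; split; first exact: (aff_map PQ Ax).
  exact: (int_map HM Ix).
split; first by move=> x y _ _; apply: inj.
move=> y [Ay Iy]; exists (y *m N); split; last by rewrite addr0 -mulmxA NM mulmx1.
split; first exact: (aff_map QP Ay). exact: (int_map HN Iy).
Qed.

Lemma bij_on_comp (R : realType) p q s (f : 'rV[R]_p -> 'rV[R]_q) (g : 'rV[R]_q -> 'rV[R]_s)
  A B C : bij_on f A B -> bij_on g B C -> bij_on (fun x => g (f x)) A C.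
Proof.
move=> [f1 [f2 f3]] [g1 [g2 g3]]; split; first by move=> x /f1 /g1.
split; first by move=> x y Ax Ay /g2 H; apply: f2 => //; apply: H; apply: f1.
move=> z /g3 [y [By <-]]; have [x [Ax <-]] := f3 y By; by exists x.
Qed.

Lemma bij_on_ext (R : realType) p q (f g : 'rV[R]_p -> 'rV[R]_q) A B :
  (forall x, f x = g x) -> bij_on f A B -> bij_on g A B.
Proof.
move=> E [f1 [f2 f3]]; split; first by move=> x; rewrite -E; apply: f1.
split; first by move=> x y Ax Ay; rewrite -!E; apply: f2.
by move=> y /f3 [x [Ax <-]]; exists x; rewrite E.
Qed.

Lemma int_equiv_trans (R : realType) p q s (P : 'rV[R]_p -> Prop) (Q : 'rV[R]_q -> Prop)
  (T : 'rV[R]_s -> Prop) : int_equiv P Q -> int_equiv Q T -> int_equiv P T.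
Proof.
move=> [A [b [H1 H2]]] [A' [b' [H1' H2']]].
exists (A *m A'), (b *m A' + b').
have E : forall x, (x *m A + b) *m A' + b' = x *m (A *m A') + (b *m A' + b').
  by move=> x; rewrite mulmxDl mulmxA addrA.
split; apply: (bij_on_ext E).
  exact: (bij_on_comp H1 H1').
exact: (bij_on_comp H2 H2').
Qed.


Local Open Scope ring_scope.
Definition wt (R : realType) (e : nat * nat) (v : nat) : R :=
  (e.1 == v)%:R - (e.2 == v)%:R.

Definition FP (R : realType) (n q : nat) (ed : 'I_q -> nat * nat) (x : 'rV[R]_q) : Prop :=
  (forall e, 0 <= x 0 e) /\
  forall v : 'I_n.+2, \sum_e x 0 e * wt R (ed e) v = (val v == 0%N)%:R - (val v == n.+1)%:R.
Arguments FP {R} n {q} ed x.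

Lemma sum_cond (R : realType) q (P : pred 'I_q) (F : 'I_q -> R) :
  \sum_(e | P e) F e = \sum_e F e * (P e)%:R.
Proof.
rewrite big_mkcond; apply: eq_bigr => e _; by case: (P e); rewrite ?mulr1 ?mulr0.
Qed.

Lemma FP_nth (R : realType) n (E : mgraph) (x : 'rV[R]_(size E)) :
  @flow_polytope R n E x <-> FP n (fun e : 'I_(size E) => nth (0%N, 0%N) E e) x.
Proof.
have K : forall v, \sum_(e < size E | (nth (0%N, 0%N) E e).1 == v) x 0 e
     - \sum_(e < size E | (nth (0%N, 0%N) E e).2 == v) x 0 e
     = \sum_e x 0 e * wt R (nth (0%N, 0%N) E e) v.
  move=> v; rewrite [X in X - _]sum_cond [X in _ - X]sum_cond -sumrB; apply: eq_bigr => e _; by rewrite /wt mulrBr.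
rewrite /flow_polytope /FP; split => -[H1 H2]; split => // v.
  by rewrite -K H2.
by rewrite K H2.
Qed.

Lemma perm_mx_int (R : realType) p (s : {perm 'I_p}) i j : intR ((perm_mx s : 'M[R]_p) i j).
Proof. rewrite /perm_mx /row_perm !mxE; exact: intRn. Qed.

Lemma perm_mx_row (R : realType) p (s : {perm 'I_p}) (x : 'rV[R]_p) j :
  (x *m perm_mx s) 0 j = x 0 (s^-1%g j).
Proof. by rewrite -[s]invgK -col_permE mxE invgK. Qed.

Lemma FP_perm (R : realType) n p (s : {perm 'I_p}) (ed1 ed2 : 'I_p -> nat * nat) :
  (forall i, ed2 i = ed1 (s i)) ->
  int_equiv (@FP R n p ed2) (FP n ed1) /\ int_equiv (@FP R n p ed1) (FP n ed2).
Proof.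
move=> He.
have MN : forall t : {perm 'I_p}, (perm_mx t : 'M[R]_p) *m perm_mx t^-1 = 1%:M.
  by move=> t; rewrite -perm_mxM mulgV perm_mx1.
have MN' : (perm_mx s^-1 : 'M[R]_p) *m perm_mx s = 1%:M.
  by rewrite -perm_mxM mulVg perm_mx1.
have H12 : forall x : 'rV[R]_p, FP n ed2 x -> FP n ed1 (x *m perm_mx s).
  move=> x [H1 H2]; split; first by move=> e; rewrite perm_mx_row; apply: H1.
  move=> v; rewrite -H2 (reindex_inj (@perm_inj _ s)) /=.
  apply: eq_bigr => i _; by rewrite perm_mx_row permK He.
have H21 : forall y : 'rV[R]_p, FP n ed1 y -> FP n ed2 (y *m perm_mx s^-1).
  move=> y [H1 H2]; split; first by move=> e; rewrite perm_mx_row; apply: H1.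
  move=> v; rewrite -H2 [in RHS](reindex_inj (@perm_inj _ s)) /=.
  apply: eq_bigr => i _; by rewrite perm_mx_row invgK He.
split.
  apply: (lin_equiv (M := perm_mx s) (N := perm_mx s^-1)) => //; exact: perm_mx_int.
apply: (lin_equiv (M := perm_mx s^-1) (N := perm_mx s)) => //; try exact: perm_mx_int.
Qed.

Lemma lin_equiv_id (R : realType) p (P Q : 'rV[R]_p -> Prop) :
  (forall x, P x <-> Q x) -> int_equiv P Q.
Proof.
move=> H; apply: (lin_equiv (M := 1%:M) (N := 1%:M)); rewrite ?mulmx1 //.
- move=> i j; rewrite mxE; exact: intRn.
- move=> i j; rewrite mxE; exact: intRn.
- by move=> x /H; rewrite mulmx1.
- by move=> x /H; rewrite mulmx1.
Qed.

Lemma perm_flow (R : realType) n q (ed : 'I_q -> nat * nat) (E : mgraph) :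
  perm_eq [seq ed i | i <- enum 'I_q] E ->
  int_equiv (@flow_polytope R n E) (FP n ed) /\ int_equiv (@FP R n q ed) (@flow_polytope R n E).
Proof.
move=> HP.
have Hq : q = size E by rewrite -(perm_size HP) size_map size_enum_ord.
subst q.
have /tuple_permP [s Hs] : perm_eq [seq ed i | i <- enum 'I_(size E)] (in_tuple E) by [].
have He : forall i, ed i = nth (0%N, 0%N) E (s i).
  move=> i; have := congr1 (fun t => nth (0%N, 0%N) t i) Hs => /=.
  rewrite (nth_map i) ?size_enum_ord // nth_ord_enum => ->.
  by rewrite (nth_map i) ?size_enum_ord // nth_ord_enum (tnth_nth (0%N, 0%N)).
have [A B] := @FP_perm R n _ s (fun e : 'I_(size E) => nth (0%N,0%N) E e) ed He.
have F1 : int_equiv (@flow_polytope R n E) (FP n (fun e : 'I_(size E) => nth (0%N, 0%N) E e)).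
  by apply: lin_equiv_id => x; apply: FP_nth.
have F2 : int_equiv (@FP R n _ (fun e : 'I_(size E) => nth (0%N, 0%N) E e)) (@flow_polytope R n E).
  by apply: lin_equiv_id => x; split => /FP_nth.
split; [exact: int_equiv_trans F1 B | exact: int_equiv_trans A F2].
Qed.


Local Open Scope ring_scope.
Inductive kd (n r : nat) : Type := KA of 'I_n | KB of 'I_n | KR of 'I_r.
Arguments KA {n r}. Arguments KB {n r}. Arguments KR {n r}.

Definition kind n r (i : 'I_(n + n + r)) : kd n r :=
  match split i with
  | inl j => match split j with inl k => KA k | inr k => KB k end
  | inr l => KR l
  end.

Definition ia n r (k : 'I_n) : 'I_(n + n + r) := lshift r (lshift n k).
Definition ib n r (k : 'I_n) : 'I_(n + n + r) := lshift r (rshift n k).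
Definition ir n r (l : 'I_r) : 'I_(n + n + r) := rshift (n + n) l.

Lemma split_l m p (j : 'I_m) : split (lshift p j) = inl j.
Proof. exact: (unsplitK (inl _ j)). Qed.
Lemma split_r m p (j : 'I_p) : split (rshift m j) = inr j.
Proof. exact: (unsplitK (inr _ j)). Qed.

Lemma kind_ia n r k : kind (@ia n r k) = KA k.
Proof. by rewrite /kind /ia !split_l. Qed.
Lemma kind_ib n r k : kind (@ib n r k) = KB k.
Proof. by rewrite /kind /ib split_l split_r. Qed.
Lemma kind_ir n r l : kind (@ir n r l) = KR l.
Proof. by rewrite /kind /ir split_r. Qed.

Lemma sum3 (R : realType) n r (F : 'I_(n + n + r) -> R) :
  \sum_i F i = \sum_k F (ia r k) + \sum_k F (ib r k) + \sum_l F (@ir n r l).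
Proof. by rewrite big_split_ord big_split_ord. Qed.

Lemma idx_cases n r (P : 'I_(n + n + r) -> Prop) :
  (forall k, P (ia r k)) -> (forall k, P (ib r k)) -> (forall l, P (@ir n r l)) ->
  forall i, P i.
Proof.
move=> HA HB HR i; rewrite -(splitK i); case: (split i) => [j|l] /=; last exact: HR.
rewrite -(splitK j); case: (split j) => [k|k] /=; [exact: HA | exact: HB].
Qed.

Lemma ia_ib_neq n r k k' : @ia n r k != ib r k'.
Proof. rewrite -val_eqE /=; have := ltn_ord k; have := ltn_ord k'; lia. Qed.
Lemma ia_ir_neq n r k l : @ia n r k != ir n l.
Proof. rewrite -val_eqE /=; have := ltn_ord k; lia. Qed.
Lemma ib_ir_neq n r k l : @ib n r k != ir n l.
Proof. rewrite -val_eqE /=; have := ltn_ord k; lia. Qed.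

Lemma mx_kind (R : realType) n r (f : kd n r -> kd n r -> R) (x : 'rV[R]_(n + n + r)) j :
  (x *m \matrix_(i, j) f (kind i) (kind j)) 0 j =
  \sum_k x 0 (ia r k) * f (KA k) (kind j) + \sum_k x 0 (ib r k) * f (KB k) (kind j)
  + \sum_l x 0 (ir n l) * f (KR l) (kind j).
Proof.
rewrite mxE sum3; congr (_ + _ + _); apply: eq_bigr => k _;
  by rewrite mxE ?kind_ia ?kind_ib ?kind_ir.
Qed.

Lemma sum_if (R : realType) (T : finType) (F G : T -> R) k :
  \sum_k0 F k0 * (if k0 == k then G k0 else 0) = F k * G k.
Proof.
rewrite (bigD1 k) //= eqxx big1 ?addr0 // => i /negbTE ->; by rewrite mulr0.
Qed.

Lemma sum_0 (R : realType) (T : finType) (F : T -> R) :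
  \sum_k0 F k0 * 0 = 0.
Proof. by rewrite big1 // => i _; rewrite mulr0. Qed.

Lemma mx_from_rows (R : realType) p q (A B : 'M[R]_(p, q)) :
  (forall x : 'rV[R]_p, x *m A = x *m B) -> A = B.
Proof. by move=> H; apply/row_matrixP => i; rewrite !rowE H. Qed.


Local Open Scope ring_scope.
Definition edB n r (h : 'I_r -> nat * nat) (i : 'I_(n + n + r)) : nat * nat :=
  match kind i with
  | KA k => (0%N, (val k).+1) | KB k => ((val k).+1, n.+1) | KR l => h l end.

Definition edS n r (h : 'I_r -> nat * nat) (S : {set 'I_n}) (i : 'I_(n + n + r)) : nat * nat :=
  match kind i with
  | KA k => (0%N, n.+1)
  | KB k => if k \in S then ((val k).+1, n.+1) else (0%N, (val k).+1)
  | KR l => h l end.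

Definition PS (R : realType) n r (h : 'I_r -> nat * nat) (S : {set 'I_n})
  (x : 'rV[R]_(n + n + r)) : Prop :=
  FP n (edB h) x /\
  forall k, if k \in S then x 0 (ia r k) <= x 0 (ib r k) else x 0 (ib r k) <= x 0 (ia r k).

Definition fM (R : realType) n r (S : {set 'I_n}) (u v : kd n r) : R :=
  match u, v with
  | KA k, KA k' => if k == k' then (if k \in S then 1 else 0) else 0
  | KA k, KB k' => if k == k' then (if k \in S then -1 else 1) else 0
  | KB k, KA k' => if k == k' then (if k \in S then 0 else 1) else 0
  | KB k, KB k' => if k == k' then (if k \in S then 1 else -1) else 0
  | KR l, KR l' => if l == l' then 1 else 0
  | _, _ => 0 end.

Definition fN (R : realType) n r (S : {set 'I_n}) (u v : kd n r) : R :=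
  match u, v with
  | KA k, KA k' => if k == k' then 1 else 0
  | KA k, KB k' => if k == k' then 1 else 0
  | KB k, KA k' => if k == k' then (if k \in S then 0 else 1) else 0
  | KB k, KB k' => if k == k' then (if k \in S then 1 else 0) else 0
  | KR l, KR l' => if l == l' then 1 else 0
  | _, _ => 0 end.

Definition Mc (R : realType) n r S : 'M[R]_(n + n + r) :=
  \matrix_(i, j) fM R S (kind i) (kind j).
Definition Nc (R : realType) n r S : 'M[R]_(n + n + r) :=
  \matrix_(i, j) fN R S (kind i) (kind j).
Arguments Mc {R n r} S. Arguments Nc {R n r} S.

Lemma xM_a (R : realType) n r (S : {set 'I_n}) (x : 'rV[R]_(n + n + r)) k :
  (x *m Mc S) 0 (ia r k) = if k \in S then x 0 (ia r k) else x 0 (ib r k).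
Proof.
rewrite mx_kind kind_ia /= !sum_if sum_0 addr0.
by case: (k \in S); rewrite ?mulr1 ?mulr0 ?add0r ?addr0.
Qed.

Lemma xM_b (R : realType) n r (S : {set 'I_n}) (x : 'rV[R]_(n + n + r)) k :
  (x *m Mc S) 0 (ib r k) =
  if k \in S then x 0 (ib r k) - x 0 (ia r k) else x 0 (ia r k) - x 0 (ib r k).
Proof.
rewrite mx_kind kind_ib /= !sum_if sum_0 addr0.
case: (k \in S); ring.
Qed.

Lemma xM_r (R : realType) n r (S : {set 'I_n}) (x : 'rV[R]_(n + n + r)) l :
  (x *m Mc S) 0 (ir n l) = x 0 (ir n l).
Proof.
rewrite mx_kind kind_ir /= !sum_0 !add0r (sum_if _ (fun _ => 1)); ring.
Qed.

Lemma yN_a (R : realType) n r (S : {set 'I_n}) (x : 'rV[R]_(n + n + r)) k :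
  (x *m Nc S) 0 (ia r k) = if k \in S then x 0 (ia r k) else x 0 (ia r k) + x 0 (ib r k).
Proof.
rewrite mx_kind kind_ia /= (sum_if _ (fun _ => 1)) sum_if sum_0 addr0.
case: (k \in S); ring.
Qed.

Lemma yN_b (R : realType) n r (S : {set 'I_n}) (x : 'rV[R]_(n + n + r)) k :
  (x *m Nc S) 0 (ib r k) = if k \in S then x 0 (ia r k) + x 0 (ib r k) else x 0 (ia r k).
Proof.
rewrite mx_kind kind_ib /= (sum_if _ (fun _ => 1)) sum_if sum_0 addr0.
case: (k \in S); ring.
Qed.

Lemma yN_r (R : realType) n r (S : {set 'I_n}) (x : 'rV[R]_(n + n + r)) l :
  (x *m Nc S) 0 (ir n l) = x 0 (ir n l).
Proof.
rewrite mx_kind kind_ir /= !sum_0 !add0r (sum_if _ (fun _ => 1)); ring.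
Qed.


Local Open Scope ring_scope.
Lemma core_equiv (R : realType) n r (h : 'I_r -> nat * nat) (S : {set 'I_n}) :
  int_equiv (@PS R n r h S) (FP n (edS h S)).
Proof.
apply: (lin_equiv (M := Mc S) (N := Nc S)).
- move=> i j; rewrite mxE; case: (kind i) => k; case: (kind j) => k' /=;
  repeat case: ifP => _; by [exact: intR0 | exact: intR1 | exact: intRN1].
- move=> i j; rewrite mxE; case: (kind i) => k; case: (kind j) => k' /=;
  repeat case: ifP => _; by [exact: intR0 | exact: intR1 | exact: intRN1].
- apply: mx_from_rows => x; rewrite mulmxA mulmx1; apply/rowP.
  apply: idx_cases => k.
  + by rewrite yN_a xM_a xM_b; case: (k \in S); ring.
  + by rewrite yN_b xM_a xM_b; case: (k \in S); ring.
  + by rewrite yN_r xM_r.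
- apply: mx_from_rows => x; rewrite mulmxA mulmx1; apply/rowP.
  apply: idx_cases => k.
  + by rewrite xM_a yN_a yN_b; case: (k \in S); ring.
  + by rewrite xM_b yN_a yN_b; case: (k \in S); ring.
  + by rewrite xM_r yN_r.
- move=> x [[H1 H2] Hc]; split.
    apply: idx_cases => k; rewrite ?xM_a ?xM_b ?xM_r //.
      by have := Hc k; case: (k \in S) => _; apply: H1.
    by have := Hc k; case: (k \in S) => hk; rewrite subr_ge0.
  move=> v; rewrite -(H2 v) !sum3; congr (_ + _); last first.
    by apply: eq_bigr => l _; rewrite xM_r /edS /edB kind_ir.
  rewrite -!big_split /=; apply: eq_bigr => k _.
  rewrite xM_a xM_b /edS /edB kind_ia kind_ib /wt /=; case: (k \in S); ring.
- move=> y [H1 H2]; split; [split|].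
  + apply: idx_cases => k; rewrite ?yN_a ?yN_b ?yN_r //.
    * by case: (k \in S); rewrite ?addr_ge0.
    * by case: (k \in S); rewrite ?addr_ge0.
  + move=> v; rewrite -(H2 v) !sum3; congr (_ + _); last first.
      by apply: eq_bigr => l _; rewrite yN_r /edS /edB kind_ir.
    rewrite -!big_split /=; apply: eq_bigr => k _.
    rewrite yN_a yN_b /edS /edB kind_ia kind_ib /wt /=; case: (k \in S); ring.
  + move=> k; rewrite yN_a yN_b; have := H1 (ib r k); case: (k \in S) => ?; lra.
Qed.


Local Open Scope ring_scope.
Lemma union_equiv (R : realType) n r (h : 'I_r -> nat * nat) :
  int_equiv (@FP R n _ (@edB n r h)) (fun x => exists S : {set 'I_n}, PS h S x).
Proof.
apply: lin_equiv_id => x; split; last by move=> [S []].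
move=> Hx; exists [set k | x 0 (ia r k) <= x 0 (ib r k)]; split => // k.
rewrite inE; case: ifP => // /negbT; rewrite -ltNge; exact: ltW.
Qed.

Lemma sum_delta2 (R : realType) p (a b : 'I_p) (F : 'I_p -> R) :
  \sum_i ((i == a)%:R + (i == b)%:R) * F i = F a + F b.
Proof.
have D : forall c, \sum_i (i == c)%:R * F i = F c.
  move=> c; rewrite (bigD1 c) //= eqxx mul1r big1 ?addr0 // => i /negbTE ->.
  by rewrite mul0r.
rewrite -(D a) -(D b) -big_split /=; apply: eq_bigr => i _; by rewrite mulrDl.
Qed.

Lemma ia_eq n r k k' : (@ia n r k' == ia r k) = (k' == k).
Proof. by rewrite -!val_eqE. Qed.
Lemma ib_eq n r k k' : (@ib n r k' == ib r k) = (k' == k).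
Proof. by rewrite -!val_eqE /= eqn_add2l. Qed.

Lemma ia_ib_F n r k k' : (@ia n r k == ib r k') = false.
Proof. by apply/negbTE; apply: ia_ib_neq. Qed.
Lemma ib_ia_F n r k k' : (@ib n r k == ia r k') = false.
Proof. by rewrite eq_sym ia_ib_F. Qed.
Lemma ia_ir_F n r k l : (@ia n r k == ir n l) = false.
Proof. by apply/negbTE; apply: ia_ir_neq. Qed.
Lemma ib_ir_F n r k l : (@ib n r k == ir n l) = false.
Proof. by apply/negbTE; apply: ib_ir_neq. Qed.

Lemma path_FP (R : realType) n r (h : 'I_r -> nat * nat) (k : 'I_n) (i2 : 'I_(n + n + r)) :
  @edB n r h i2 = ((val k).+1, n.+1) ->
  @FP R n _ (@edB n r h) (\row_i ((i == ia r k)%:R + (i == i2)%:R)).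
Proof.
move=> He; split; first by move=> e; rewrite mxE addr_ge0.
move=> v; rewrite (eq_bigr (fun i => ((i == ia r k)%:R + (i == i2)%:R) * wt R (edB h i) v));
  last by move=> i _; rewrite mxE.
rewrite sum_delta2 He /edB kind_ia /wt /= [(0%N == _)]eq_sym [(n.+1 == _)]eq_sym; ring.
Qed.

Lemma abs_delta (R : realType) p (i b c : 'I_p) :
  `|((i == b)%:R - (i == c)%:R : R)| <= 1.
Proof. by case: (i == b); case: (i == c); rewrite ?subrr ?subr0 ?sub0r ?normrN ?normr1 ?normr0. Qed.

Lemma disj_helper (R : realType) n r (h : 'I_r -> nat * nat) (j2 : 'I_n -> 'I_r)
  (Hj2 : forall k, h (j2 k) = ((val k).+1, n.+1)) (S T : {set 'I_n}) k (x : 'rV[R]_(n + n + r)) :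
  k \in S -> k \notin T -> PS h S x -> relint (PS h T) x -> False.
Proof.
move=> kS kT [_ HS] [Px [e [e0 He]]].
pose p : 'rV[R]_(n + n + r) := \row_i ((i == ia r k)%:R + (i == ib r k)%:R).
pose q : 'rV[R]_(n + n + r) := \row_i ((i == ia r k)%:R + (i == ir n (j2 k))%:R).
have Pp : PS h T p.
  split; first by apply: path_FP; rewrite /edB kind_ib.
  move=> k'; rewrite !mxE ia_eq ib_eq ia_ib_F ib_ia_F add0r addr0; by case: ifP.
have Pq : PS h T q.
  split; first by apply: path_FP; rewrite /edB kind_ir Hj2.
  move=> k'; rewrite !mxE ia_eq ia_ir_F ib_ir_F ib_ia_F add0r !addr0.
  case: (eqVneq k' k) => [->|_]; first by rewrite (negbTE kT) /= ler01.
  by case: ifP.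
pose t := e / 2.
have t0 : 0 < t by rewrite /t divr_gt0.
have te : t < e by rewrite /t; lra.
pose y := x + t *: (p - q).
have Ay : aff (PS h T) y.
  exists 3, (fun i : 'I_3 => nth x [:: x; p; q] i), (fun i : 'I_3 => nth 0 [:: 1; t; -t] i).
  split; first by case=> [[|[|[|m]]] Hm] //=.
  split; first by rewrite !big_ord_recl big_ord0 /=; ring.
  apply/rowP => i; rewrite !big_ord_recl big_ord0 /= !mxE; ring.
have Cy : forall i, `|y 0 i - x 0 i| < e.
  move=> i; rewrite /y !mxE addrC addKr normrM (gtr0_norm t0).
  rewrite (_ : _ - _ = (i == ib r k)%:R - (i == ir n (j2 k))%:R); last by ring.
  have Hd := abs_delta R i (ib r k) (ir n (j2 k)); nra.
have [_ HT] := He y Ay Cy.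
have := HT k; rewrite (negbTE kT) /y !mxE eqxx.
rewrite ?ia_eq ?ib_eq ?eqxx ?ia_ib_F ?ib_ia_F ?ia_ir_F ?ib_ir_F.
have := HS k; rewrite kS => H /=; rewrite ?mulr0n ?mulr1n; lra.
Qed.

Lemma relint_disj (R : realType) n r (h : 'I_r -> nat * nat) (j2 : 'I_n -> 'I_r)
  (Hj2 : forall k, h (j2 k) = ((val k).+1, n.+1)) (S T : {set 'I_n}) :
  S != T -> forall x : 'rV[R]_(n + n + r), ~ (relint (PS h S) x /\ relint (PS h T) x).
Proof.
move=> ST x [HS HT].
have [k Hk] : exists k, (k \in S) != (k \in T).
  apply/existsP; apply: contraR ST => /existsPn H; apply/eqP/setP => k.
  by have := H k; move/negPn/eqP.
case kS: (k \in S); move: Hk; rewrite kS.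
  move=> /= kT; apply: (disj_helper Hj2 kS kT (proj1 HS) HT).
move=> /negPn kT; apply: (disj_helper Hj2 kT (negbT kS) (proj1 HT) HS).
Qed.


Local Close Scope ring_scope.
Lemma count_sum (T : Type) (pr : pred T) (s : seq T) :
  count pr s = \sum_(x <- s) pr x.
Proof. by elim: s => [|x s IH]; rewrite ?big_nil ?big_cons //= IH. Qed.

Lemma count_enum (T : Type) q (pr : pred T) (f : 'I_q -> T) :
  count pr [seq f i | i <- enum 'I_q] = \sum_(i < q) pr (f i).
Proof. by rewrite count_map count_sum big_enum. Qed.

Lemma count_flat_enum (T : Type) q (pr : pred T) (F : 'I_q -> seq T) :
  count pr (flatten [seq F i | i <- enum 'I_q]) = \sum_(i < q) count pr (F i).
Proof. rewrite count_flatten sumnE !big_map. by rewrite -enumT big_enum. Qed.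

Lemma count_flat_enum_nseq (T : Type) q (pr : pred T) (m : 'I_q -> nat) (f : 'I_q -> T) :
  count pr (flatten [seq nseq (m i) (f i) | i <- enum 'I_q]) = \sum_(i < q) pr (f i) * m i.
Proof. rewrite count_flat_enum; apply: eq_bigr => i _; by rewrite count_nseq. Qed.

Lemma iota_sum n (F : nat -> nat) : \sum_(i <- iota 1 n) F i = \sum_(k < n) F k.+1.
Proof. by rewrite -(big_mkord xpredT (fun k => F k.+1)) /index_iota subn0 (iotaDl 1 0) big_map. Qed.

Lemma count_flat_iota (T : Type) n (pr : pred T) (f : nat -> T) m :
  count pr (flatten [seq nseq m (f i) | i <- iota 1 n]) = \sum_(k < n) pr (f k.+1) * m.
Proof.
rewrite count_flatten sumnE !big_map iota_sum; apply: eq_bigr => k _; by rewrite count_nseq.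
Qed.

Lemma sum_nth_count (T : Type) (x0 : T) (pr : pred T) (s : seq T) :
  \sum_(l < size s) pr (nth x0 s l) = count pr s.
Proof.
rewrite -(big_mkord xpredT (fun l => nat_of_bool (pr (nth x0 s l)))) /index_iota subn0.
by rewrite -[in RHS](mkseq_nth x0 s) /mkseq count_map count_sum.
Qed.

Lemma sum3n n r (g : 'I_(n + n + r) -> nat) :
  \sum_i g i = \sum_k g (ia r k) + \sum_k g (ib r k) + \sum_l g (@ir n r l).
Proof. by rewrite big_split_ord big_split_ord. Qed.

Lemma sB_ia n r (h : 'I_r -> nat * nat) (f : nat * nat -> nat) :
  \sum_(k < n) f (edB h (ia r k)) = \sum_(k < n) f (0%N, (val k).+1).
Proof. by apply: eq_bigr => k _; rewrite /edB kind_ia. Qed.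
Lemma sB_ib n r (h : 'I_r -> nat * nat) (f : nat * nat -> nat) :
  \sum_(k < n) f (edB h (ib r k)) = \sum_(k < n) f ((val k).+1, n.+1).
Proof. by apply: eq_bigr => k _; rewrite /edB kind_ib. Qed.
Lemma sB_ir n r (h : 'I_r -> nat * nat) (f : nat * nat -> nat) :
  \sum_(l < r) f (@edB n r h (ir n l)) = \sum_(l < r) f (h l).
Proof. by apply: eq_bigr => k _; rewrite /edB kind_ir. Qed.
Lemma sS_ia n r (h : 'I_r -> nat * nat) S (f : nat * nat -> nat) :
  \sum_(k < n) f (edS h S (ia r k)) = \sum_(k < n) f (0%N, n.+1).
Proof. by apply: eq_bigr => k _; rewrite /edS kind_ia. Qed.
Lemma sS_ib n r (h : 'I_r -> nat * nat) S (f : nat * nat -> nat) :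
  \sum_(k < n) f (edS h S (ib r k)) =
  \sum_(k < n) f (if k \in S then ((val k).+1, n.+1) else (0%N, (val k).+1)).
Proof. by apply: eq_bigr => k _; rewrite /edS kind_ib. Qed.
Lemma sS_ir n r (h : 'I_r -> nat * nat) (S : {set 'I_n}) (f : nat * nat -> nat) :
  \sum_(l < r) f (@edS n r h S (ir n l)) = \sum_(l < r) f (h l).
Proof. by apply: eq_bigr => k _; rewrite /edS kind_ir. Qed.

Definition R1 n a b c : seq (nat * nat) :=
  flatten [seq nseq a.-1 (0%N, i) | i <- iota 1 n]
  ++ flatten [seq nseq b.-1 (i, n.+1) | i <- iota 1 n]
  ++ flatten [seq nseq c p | p <- inner_pairs n].

Definition hR n a b c (l : 'I_(n + size (R1 n a b c))) : nat * nat :=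
  match split l with
  | inl k => ((val k).+1, n.+1)
  | inr l' => nth (0%N, 0%N) (R1 n a b c) l'
  end.

Lemma sum_hR n a b c (pr : pred (nat * nat)) :
  \sum_l pr (@hR n a b c l) = \sum_(k < n) pr ((val k).+1, n.+1) + count pr (R1 n a b c).
Proof.
rewrite big_split_ord -(sum_nth_count (0%N, 0%N)); congr (_ + _); apply: eq_bigr => k _;
by rewrite /hR ?split_l ?split_r.
Qed.

Lemma count_R1 n a b c (pr : pred (nat * nat)) :
  count pr (R1 n a b c) =
  \sum_(k < n) pr (0%N, k.+1) * a.-1 + \sum_(k < n) pr (k.+1, n.+1) * b.-1
  + count pr (flatten [seq nseq c p | p <- inner_pairs n]).
Proof. by rewrite /R1 !count_cat !count_flat_iota addnA. Qed.

Lemma perm_kbig n a b c : (0 < a)%N -> (0 < b)%N ->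
  perm_eq [seq @edB n _ (@hR n a b c) i | i <- enum 'I_(n + n + (n + size (R1 n a b c)))]
          (kabc n a b.+1 c).
Proof.
move=> a0 b0; apply/seq.permP => pr.
rewrite count_enum sum3n /kabc !count_cat !count_flat_iota.
rewrite (@sB_ia n _ (@hR n a b c) (fun e => nat_of_bool (pr e))) (@sB_ib n _ (@hR n a b c) (fun e => nat_of_bool (pr e))).
rewrite (@sB_ir n _ (@hR n a b c) (fun e => nat_of_bool (pr e))).
rewrite sum_hR count_R1.
have E1 : \sum_(k < n) pr (0%N, k.+1) * a =
          \sum_(k < n) pr (0%N, (val k).+1) + \sum_(k < n) pr (0%N, k.+1) * a.-1.
  rewrite -big_split; apply: eq_bigr => k _ /=; case: (pr _) => /=; lia.
have E2 : \sum_(k < n) pr (k.+1, n.+1) * b.+1 =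
          \sum_(k < n) pr ((val k).+1, n.+1) + (\sum_(k < n) pr ((val k).+1, n.+1)
          + \sum_(k < n) pr (k.+1, n.+1) * b.-1).
  rewrite -!big_split; apply: eq_bigr => k _ /=; case: (pr _) => /=; lia.
rewrite E1 E2; ring.
Qed.

Lemma perm_kS n a b c (S : {set 'I_n}) : (0 < a)%N -> (0 < b)%N ->
  perm_eq [seq @edS n _ (@hR n a b c) S i | i <- enum 'I_(n + n + (n + size (R1 n a b c)))]
          (kabcS a b c S).
Proof.
move=> a0 b0; apply/seq.permP => pr.
rewrite count_enum sum3n /kabcS !count_cat !count_flat_enum_nseq count_nseq.
rewrite (@sS_ia n _ (@hR n a b c) S (fun e => nat_of_bool (pr e))) (@sS_ib n _ (@hR n a b c) S (fun e => nat_of_bool (pr e))).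
rewrite (@sS_ir n _ (@hR n a b c) S (fun e => nat_of_bool (pr e))).
rewrite sum_hR count_R1 sum_nat_const card_ord.
have E : \sum_(k < n) pr (0%N, (val k).+1) * (a - (k \in S))
       + \sum_(k < n) pr ((val k).+1, n.+1) * (b + (k \in S)) =
       \sum_(k < n) pr (if k \in S then ((val k).+1, n.+1) else (0%N, (val k).+1))
       + \sum_(k < n) pr ((val k).+1, n.+1)
       + \sum_(k < n) pr (0%N, k.+1) * a.-1 + \sum_(k < n) pr (k.+1, n.+1) * b.-1.
  rewrite -!big_split; apply: eq_bigr => k _ /=.
  case: (k \in S); case: (pr (0%N, _)); case: (pr (_, n.+1)) => /=; lia.
move: E.
set X1 := \sum_(k < n) _ * (a - _).
set X2 := \sum_(k < n) _ * (b + _).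
set X3 := \sum_(k < n) nat_of_bool (pr (if _ \in S then _ else _)).
set X4 := \sum_(k < n) nat_of_bool (pr ((val k).+1, n.+1)).
set X5 := \sum_(k < n) _ * a.-1.
set X6 := \sum_(k < n) _ * b.-1.
set C := count pr _.
set P := nat_of_bool (pr (0%N, n.+1)).
lia.
Qed.


Local Open Scope ring_scope.
Theorem lemma5p3 (R : realType) (n a b c : nat) :
  (0 < n)%N -> (0 < a)%N -> (0 < b)%N ->
  exists (m : nat) (P : {set 'I_n} -> 'rV[R]_m -> Prop),
    (forall S T : {set 'I_n}, S != T ->
       forall x, ~ (relint (P S) x /\ relint (P T) x)) /\
    int_equiv (@flow_polytope R n (kabc n a b.+1 c))
              (fun x => exists S, P S x) /\
    (forall S : {set 'I_n}, int_equiv (P S) (@flow_polytope R n (@kabcS n a b c S))).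
Proof.
move=> n0 a0 b0.
pose r := (n + size (R1 n a b c))%N.
pose h := @hR n a b c.
exists (n + n + r)%N, (fun S => @PS R n r h S).
split.
  move=> S T ST x.
  apply: (@relint_disj R n r h (fun k => lshift (size (R1 n a b c)) k)) => //.
  by move=> k; rewrite /h /hR split_l.
split.
  have [A _] := @perm_flow R n _ _ _ (@perm_kbig n a b c a0 b0).
  exact: (int_equiv_trans A (@union_equiv R n r h)).
move=> S.
have [_ B] := @perm_flow R n _ _ _ (@perm_kS n a b c S a0 b0).
exact: (int_equiv_trans (@core_equiv R n r h S) B).
Qed.
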